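(* Let $\alpha,\beta>-1$, $n\ge1$, and let $d_{k,n}$, $0\le k\le n$, be as defined below. Then for every integer $k\ge0$ with $k+2\le n$, $$d_{k,n}=\frac{2(\alpha-\beta)(k+1)}{n(n+\alpha+\beta+1)-k^2-(\alpha+\beta+1)k}\,d_{k+1,n}+\frac{n(n+\alpha+\beta+1)-(k+2)^2+(\alpha+\beta+1)(k+2)}{n(n+\alpha+\beta+1)-k^2-(\alpha+\beta+1)k}\,d_{k+2,n},$$ and $$d_{n,n}=\frac{\Gamma(2n+\alpha+\beta+1)}{2^{2n}\Gamma(n+\alpha+\beta+1)\Gamma(n+1)},\qquad d_{n-1,n}=\frac{(\alpha-\beta)\Gamma(2n+\alpha+\beta)}{2^{2n-1}\Gamma(n+\alpha+\beta+1)\Gamma(n)}.$$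
   Context: For $\alpha,\beta>-1$ and $0\le k\le n$, $d_{k,n}=\frac{(n+\alpha+\beta+1)_k(k+\alpha+1)_{n-k}}{(n-k)!\,2^{2k}\Gamma(k+1)}\,{}_3F_2\!\left[\begin{matrix}k-n,\ n+k+\alpha+\beta+1,\ k+\frac12\\ k+\alpha+1,\ 2k+1\end{matrix};1\right]$, with $(a)_k$ the Pochhammer symbol and ${}_3F_2$ the generalized hypergeometric series. Equivalently, these are the coefficients in the Chebyshev expansion $P_n^{(\alpha,\beta)}(x)=d_{0,n}+2\sum_{k=1}^n d_{k,n}T_k(x)$, where $P_n^{(\alpha,\beta)}$ is the Jacobi polynomial and $T_k(\cos\theta)=\cos k\theta$. *)

(* Defs.v *)
From Stdlib Require Import Reals Arith Factorial.
Open Scope R_scope.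

Fixpoint poch (a : R) (k : nat) : R :=
  match k with
  | O => 1
  | S k' => poch a k' * (a + INR k')
  end.

(* The 3F2 at 1 with upper parameter k-n (k <= n) terminates: all terms with
   index j > n-k vanish, so it is the finite sum over j = 0 .. n-k. *)
Definition hyp3F2_term (k n : nat) (al be : R) : R :=
  sum_f_R0 (fun j =>
      poch (INR k - INR n) j * poch (INR n + INR k + al + be + 1) j
      * poch (INR k + / 2) j
      / (poch (INR k + al + 1) j * poch (2 * INR k + 1) j * INR (fact j)))
    (n - k).

(* d_{k,n}; Gamma(k+1) = k!. *)
Definition dcoef (al be : R) (k n : nat) : R :=
  poch (INR n + al + be + 1) k * poch (INR k + al + 1) (n - k)
  / (INR (fact (n - k)) * 2 ^ (2 * k) * INR (fact k))
  * hyp3F2_term k n al be.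

(* Main.v *)
Require Import Defs.
From Stdlib Require Import Reals Arith Factorial Lra Lia.
Open Scope R_scope.

Lemma poch_add x p q : poch x (p+q) = poch x p * poch (x + INR p) q.
Proof.
  induction q as [|q IH].
  - rewrite Nat.add_0_r; simpl; ring.
  - rewrite Nat.add_succ_r; simpl poch; rewrite IH, plus_INR; ring.
Qed.

Lemma poch_S_front x q : poch x (S q) = x * poch (x+1) q.
Proof.
  change (S q) with (1 + q)%nat; rewrite poch_add; simpl; ring_simplify.
  replace (x + 1) with (x + INR 1) by (simpl; ring). ring.
Qed.

Lemma poch_pos x j : 0 < x -> 0 < poch x j.
Proof.
  intros Hx; induction j as [|j IH]; simpl; [lra|].
  apply Rmult_lt_0_compat; [exact IH|]. pose proof (pos_INR j); lra.
Qed.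

Lemma poch_neg m j : (j <= m)%nat ->
  poch (- INR m) j * INR (fact (m - j)) = (-1)^j * INR (fact m).
Proof.
  induction j as [|j IH]; intros Hj.
  - rewrite Nat.sub_0_r; simpl; ring.
  - assert (Hmj : (m - j = S (m - S j))%nat) by lia.
    rewrite Hmj, fact_simpl, mult_INR in IH.
    rewrite S_INR, minus_INR in IH by lia.
    simpl poch. simpl pow. transitivity (-1 * (poch (- INR m) j * ((INR m - INR (S j) + 1) * INR (fact (m - S j))))); [rewrite S_INR; ring|]. rewrite IH by lia. ring.
Qed.

Lemma poch_fact p j : poch (INR p + 1) j * INR (fact p) = INR (fact (p+j)).
Proof.
  induction j as [|j IH].
  - rewrite Nat.add_0_r; simpl; ring.
  - rewrite Nat.add_succ_r, fact_simpl, mult_INR, <- IH, S_INR, plus_INR.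
    simpl poch. ring.
Qed.

Lemma fact_double k : INR (fact (2*k)) = 2^(2*k) * INR (fact k) * poch (/2) k.
Proof.
  induction k as [|k IH].
  - simpl; ring.
  - replace (2 * S k)%nat with (S (S (2*k))) by lia.
    rewrite !fact_simpl, !mult_INR, IH, !S_INR, mult_INR.
    simpl pow; simpl poch. simpl INR. field.
Qed.

Definition Aq (al be : R) (n s : nat) : R :=
  poch (INR n + al + be + 1) s * poch (INR s + al + 1) (n - s) * poch (/2) s
  / INR (fact (n - s)).

Definition Tq al be n k j :=
  (-1)^j * Aq al be n (k+j) / (INR (fact (2*k+j)) * INR (fact j)).

Lemma dcoef_eq al be k n : -1 < al -> (k <= n)%nat ->
  dcoef al be k n = sum_f_R0 (fun j => Tq al be n k j) (n - k).
Proof.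
  intros Hal Hkn. unfold dcoef, hyp3F2_term.
  rewrite scal_sum. apply sum_eq. intros j Hj.
  set (m := (n - k)%nat) in *.
  assert (Hn : n = (k + m)%nat) by lia. clearbody m.
  unfold Tq, Aq.
  replace (n - (k + j))%nat with (m - j)%nat by lia.
  rewrite (poch_add (INR n + al + be + 1) k j).
  replace (INR n + INR k + al + be + 1) with (INR n + al + be + 1 + INR k) by ring.
  replace m with (j + (m - j))%nat at 1 by lia.
  rewrite (poch_add (INR k + al + 1) j (m - j)).
  replace (INR (k + j) + al + 1) with (INR k + al + 1 + INR j) by (rewrite plus_INR; ring).
  rewrite (poch_add (/2) k j).
  replace (INR k + /2) with (/2 + INR k) by ring.
  assert (E3 : poch (INR k - INR n) j = (-1)^j * INR (fact m) / INR (fact (m - j))).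
  { replace (INR k - INR n) with (- INR m) by (rewrite Hn, plus_INR; ring).
    apply (Rmult_eq_reg_r (INR (fact (m - j)))); [|apply INR_fact_neq_0].
    rewrite (poch_neg m j) by lia. field. apply INR_fact_neq_0. }
  assert (E4 : poch (2 * INR k + 1) j = INR (fact (2*k+j)) / INR (fact (2*k))).
  { rewrite <- (poch_fact (2*k) j). replace (INR (2*k)) with (2*INR k) by (rewrite mult_INR; simpl; ring). field.
    apply INR_fact_neq_0. }
  rewrite E3, E4, (fact_double k).
  assert (P1 : 0 < poch (INR k + al + 1) j) by (apply poch_pos; pose proof (pos_INR k); lra).
  assert (P2 : 0 < poch (/2) k) by (apply poch_pos; lra).
  assert (P3 : 0 < 2 ^ (2*k)) by (apply pow_lt; lra).
  pose proof (INR_fact_neq_0 (2*k+j)). pose proof (INR_fact_neq_0 (m - j)).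
  pose proof (INR_fact_neq_0 m). pose proof (INR_fact_neq_0 j). pose proof (INR_fact_neq_0 k).
  field. repeat split; lra.
Qed.

Lemma poch_S x k : poch x (S k) = poch x k * (x + INR k).
Proof. reflexivity. Qed.

Lemma A_rec al be n s : -1 < al -> (s < n)%nat ->
  Aq al be n (S s) = (INR s + (INR n+al+be+1)) * (INR s + /2) * (INR n - INR s)
     * Aq al be n s / (INR s + al + 1).
Proof.
  intros Hal Hs. unfold Aq.
  replace (n - s)%nat with (S (n - S s)) by lia.
  rewrite (poch_S_front (INR s + al + 1) (n - S s)), fact_simpl, mult_INR.
  rewrite !(poch_S _ s).
  replace (INR (S s) + al + 1) with (INR s + al + 1 + 1) by (rewrite S_INR; ring).
  rewrite S_INR, minus_INR by lia. rewrite S_INR.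
  pose proof (INR_fact_neq_0 (n - S s)). pose proof (pos_INR s).
  assert (INR n - (INR s + 1) + 1 <> 0).
  { apply lt_INR in Hs. lra. }
  field. repeat split; lra.
Qed.

Definition Hq al be n k j :=
  4*(INR k+1)*(-1)^j*(INR n - INR(k+j))*(INR(k+j)+(INR n+al+be+1))*(INR(k+j)+/2)
  *Aq al be n (k+j) / (INR(fact(2*k+j+2)) * INR(fact j)).

Lemma H_alt al be n k j : -1 < al -> (k+j < n)%nat ->
  Hq al be n k j = 4*(INR k+1)*(-1)^j*(INR(k+j)+al+1)*Aq al be n (S (k+j))
     / (INR(fact(2*k+j+2)) * INR(fact j)).
Proof.
  intros Hal H. unfold Hq. rewrite (A_rec al be n (k+j)) by auto.
  pose proof (INR_fact_neq_0 (2*k+j+2)). pose proof (INR_fact_neq_0 j).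
  pose proof (pos_INR (k+j)).
  field. repeat split; lra.
Qed.

Section S.
Variables (al be : R) (n k : nat).
Hypothesis Hal : -1 < al.
Hypothesis Hbe : -1 < be.
Let D := INR n * (INR n + al + be + 1) - INR k ^ 2 - (al + be + 1) * INR k.
Let c1 := 2 * (al - be) * (INR k + 1).
Let c2 := INR n * (INR n + al + be + 1) - (INR k + 2) ^ 2 + (al + be + 1) * (INR k + 2).

Lemma Igen i : (k + S (S i) <= n)%nat ->
  D * Tq al be n k (S (S i)) - c1 * Tq al be n (k+1) (S i) - c2 * Tq al be n (k+2) i
  = Hq al be n k (S (S i)) - Hq al be n k (S i).
Proof.
  intros Hi. rewrite (H_alt al be n k (S i)) by (auto; lia).
  unfold Tq, Hq, D, c1, c2.
  replace (k + S (S i))%nat with (S (k + S i)) by lia.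
  replace (k + 1 + S i)%nat with (S (k + S i)) by lia.
  replace (k + 2 + i)%nat with (S (k + S i)) by lia.
  replace (2 * (k + 1) + S i)%nat with (S (2*k + S (S i))) by lia.
  replace (2 * (k + 2) + i)%nat with (S (S (2*k + S (S i)))) by lia.
  replace (2 * k + S (S i) + 2)%nat with (S (S (2*k + S (S i)))) by lia.
  replace (2 * k + S i + 2)%nat with (S (2*k + S (S i))) by lia.
  rewrite !(fact_simpl (S (2 * k + S (S i)))), !(fact_simpl (2 * k + S (S i))).
  rewrite !(fact_simpl (S i)), !(fact_simpl i).
  set (X := fact (2 * k + S (S i))). set (Y := fact i). set (A := Aq al be n (S (k + S i))).
  cbn [pow].
  rewrite !mult_INR, !S_INR, !plus_INR, !mult_INR, !S_INR.
  pose proof (INR_fact_neq_0 (2 * k + S (S i))). pose proof (INR_fact_neq_0 i).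
  fold X Y in H, H0.
  pose proof (pos_INR k). pose proof (pos_INR i).
  simpl (INR 2).
  clearbody X Y A. change (INR 0) with 0. field. repeat split; lra.
Qed.

Lemma I0 : (k < n)%nat -> D * Tq al be n k 0 = Hq al be n k 0.
Proof.
  intros Hk. unfold Tq, Hq, D.
  rewrite !Nat.add_0_r.
  replace (2 * k + 2)%nat with (S (S (2*k))) by lia.
  rewrite !fact_simpl.
  pose proof (INR_fact_neq_0 (2 * k)).
  set (X := fact (2 * k)) in *. set (A := Aq al be n k). clearbody X A.
  pose proof (pos_INR k).
  rewrite !mult_INR, !S_INR, !mult_INR. change (INR 0) with 0. change (INR 1) with 1.
  simpl (INR 2). cbn [pow].
  pose proof (INR_fact_neq_0 0). field. repeat split; lra.
Qed.

Lemma I1 : (k + 1 < n)%nat ->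
  D * Tq al be n k 1 - c1 * Tq al be n (k+1) 0 = Hq al be n k 1 - Hq al be n k 0.
Proof.
  intros Hk. rewrite (H_alt al be n k 0) by (auto; lia).
  unfold Tq, Hq, D, c1.
  replace (S (k + 0))%nat with (S k) by lia.
  replace (k + 1 + 0)%nat with (S k) by lia.
  replace (k + 1)%nat with (S k) by lia.
  replace (2 * S k + 0)%nat with (S (S (2*k))) by lia.
  replace (2 * k + 1 + 2)%nat with (S (S (S (2*k)))) by lia.
  replace (2 * k + 0 + 2)%nat with (S (S (2*k))) by lia.
  replace (2 * k + 1)%nat with (S (2*k)) by lia.
  repeat rewrite fact_simpl. change (fact 0) with 1%nat.
  pose proof (INR_fact_neq_0 (2 * k)).
  set (X := fact (2 * k)) in *. set (A := Aq al be n (S k)). clearbody X A.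
  pose proof (pos_INR k).
  cbn [pow]. pose proof (INR_fact_neq_0 0). pose proof (INR_fact_neq_0 1).
  rewrite !mult_INR, !S_INR, !plus_INR, !mult_INR. change (INR 0) with 0. change (INR 1) with 1.
  simpl (INR 2).
  field. repeat split; lra.
Qed.

Lemma Iind q : (k + S (S q) <= n)%nat ->
  D * sum_f_R0 (fun j => Tq al be n k j) (S (S q))
  - c1 * sum_f_R0 (fun j => Tq al be n (k+1) j) (S q)
  - c2 * sum_f_R0 (fun j => Tq al be n (k+2) j) q = Hq al be n k (S (S q)).
Proof.
  induction q as [|q IH]; intros Hkq.
  - cbn [sum_f_R0].
    pose proof (I0 ltac:(lia)). pose proof (I1 ltac:(lia)). pose proof (Igen 0 Hkq).
    lra.
  - rewrite (tech5 (fun j => Tq al be n k j) (S (S q))), (tech5 (fun j => Tq al be n (k+1) j) (S q)), (tech5 (fun j => Tq al be n (k+2) j) q).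
    pose proof (IH ltac:(lia)). pose proof (Igen (S q) Hkq). lra.
Qed.

Lemma rec_main : (k + 2 <= n)%nat ->
  D * dcoef al be k n - c1 * dcoef al be (k+1) n - c2 * dcoef al be (k+2) n = 0.
Proof.
  intros Hk. rewrite !dcoef_eq by (auto; lia).
  replace (n - k)%nat with (S (S (n - k - 2))) by lia.
  replace (n - (k + 1))%nat with (S (n - k - 2)) by lia.
  replace (n - (k + 2))%nat with (n - k - 2)%nat by lia.
  rewrite Iind by lia.
  unfold Hq.
  replace (INR (k + S (S (n - k - 2)))) with (INR n) by (f_equal; lia).
  unfold Rdiv. ring.
Qed.
End S.

Theorem mainTheorem2 (al be : R) (n : nat) :
  -1 < al -> -1 < be -> (1 <= n)%nat ->
  (forall k : nat, (k + 2 <= n)%nat ->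
     let D := INR n * (INR n + al + be + 1) - INR k ^ 2 - (al + be + 1) * INR k in
     dcoef al be k n =
       2 * (al - be) * (INR k + 1) / D * dcoef al be (k + 1) n
       + (INR n * (INR n + al + be + 1) - (INR k + 2) ^ 2
          + (al + be + 1) * (INR k + 2)) / D * dcoef al be (k + 2) n)
  /\ dcoef al be n n =
       poch (INR n + al + be + 1) n / (2 ^ (2 * n) * INR (fact n))
  /\ dcoef al be (n - 1) n =
       (al - be) * poch (INR n + al + be + 1) (n - 1)
       / (2 ^ (2 * n - 1) * INR (fact (n - 1))).
Proof.
  intros Hal Hbe Hn. split; [|split].
  - intros k Hk. cbv zeta.
    pose proof (rec_main al be n k Hal Hk) as H. cbv zeta in H.
    assert (Hkn : INR k + 2 <= INR n).
    { replace 2 with (INR 2) by (simpl; ring). rewrite <- plus_INR. apply le_INR; exact Hk. }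
    pose proof (pos_INR k).
    assert (HD : 0 < INR n * (INR n + al + be + 1) - INR k ^ 2 - (al + be + 1) * INR k).
    { replace (INR n * (INR n + al + be + 1) - INR k ^ 2 - (al + be + 1) * INR k)
        with ((INR n - INR k) * (INR n + INR k + al + be + 1)) by ring.
      apply Rmult_lt_0_compat; lra. }
    apply (Rmult_eq_reg_l (INR n * (INR n + al + be + 1) - INR k ^ 2 - (al + be + 1) * INR k));
      [|lra].
    transitivity (2 * (al - be) * (INR k + 1) * dcoef al be (k + 1) n +
      (INR n * (INR n + al + be + 1) - (INR k + 2) ^ 2 + (al + be + 1) * (INR k + 2))
      * dcoef al be (k + 2) n); [lra|].
    field. lra.
  - unfold dcoef, hyp3F2_term. rewrite Nat.sub_diag. cbn [sum_f_R0 poch fact].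
    change (INR 1) with 1.
    assert (0 < 2 ^ (2 * n)) by (apply pow_lt; lra).
    pose proof (INR_fact_neq_0 n).
    field. lra.
  - destruct n as [|m]; [lia|].
    replace (S m - 1)%nat with m by lia.
    unfold dcoef, hyp3F2_term.
    replace (S m - m)%nat with 1%nat by lia.
    replace (2 * S m - 1)%nat with (S (2 * m)) by lia.
    cbn [sum_f_R0 poch fact pow].
    change (INR 1) with 1. change (INR 0) with 0.
    rewrite !S_INR.
    assert (0 < 2 ^ (2 * m)) by (apply pow_lt; lra).
    pose proof (INR_fact_neq_0 m). pose proof (pos_INR m).
    change (INR (1 * 1)%nat) with 1. field. repeat split; lra.
Qed.
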